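(* If $F$ is a balanced wiring, then $\mathrm{Comp}(F)$ is a separating space for $F$: (i) for every $\mathbf u\in\mathrm{Comp}(F)$, $F\mathbf u\subseteq\mathrm{Comp}(F)$; and (ii) for every $n$, if $F^n\mathbf u=0$ for all $\mathbf u\in\mathrm{Comp}(F)$ then $F^n=0$.
   Context: Terms: first-order terms built from an infinite set of variables, a binary function symbol $\bullet$ written infix, infinitely many constant symbols including a distinguished constant $\star$, and for each $n\ge1$ at least one $n$-ary function symbol. $\mathrm{var}(t)$ is the set of variables of $t$; $t$ is closed if $\mathrm{var}(t)=\emptyset$. The height $h(t)$ is the maximal distance from the root to a node in the tree of $t$; the height of an occurrence of a variable in $t$ is its distance from the root. A flow is a pair of terms written $t\leftarrow u$ with $\mathrm{var}(t)\subseteq\mathrm{var}(u)$, considered up to renaming. A fact is a flow $t\leftarrow\star$ (so $t$ is closed). The product of flows $u\leftarrow v$ and $t\leftarrow w$ (representatives chosen with disjoint variable sets) is defined iff $v$ and $t$ are unifiable, and then equals $u\theta\leftarrow w\theta$ with $\theta$ a most general unifier of $v,t$. A wiring is a finite set of flows, written as a formal sum, with $0$ the empty wiring; product $FG=\{fg: f\in F,g\in G, fg\text{ defined}\}$, $F^n$ the $n$-fold product. For a fact $\mathbf u$, $F\mathbf u$ denotes $F\{\mathbf u\}$ (a set of facts). A flow $t\leftarrow u$ is balanced if for every variable $x$, all occurrences of $x$ in $t$ and in $u$ have the same height; a wiring is balanced if all its flows are. The height of a flow $t\leftarrow u$ is $\max\{h(t),h(u)\}$; the height $h(F)$ of a wiring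 is the maximal height of its flows. For a balanced wiring $F$, its computation space $\mathrm{Comp}(F)$ is the set of facts $t\leftarrow\star$ with $h(t)\le h(F)$ and $t$ built using only symbols occurring in $F$ and the constant $\star$. A separating space for a wiring $F$ is a set of facts $\mathbf S$ such that $F\mathbf u\subseteq\mathbf S$ for all $\mathbf u\in\mathbf S$, and such that, for every $n$, $F^n\mathbf u=0$ for all $\mathbf u\in\mathbf S$ implies $F^n=0$. *)

(* Defs.v *)
From Stdlib Require Import Arith List.
Import ListNotations.

(* This provides
   infinitely many constants (arity 0), including the distinguished star
   (name 0, arity 0), the binary symbol "bullet" (name 0, arity 2), and
   infinitely many symbols of every arity n >= 1. *)
Record symb : Type := Symb { sname : nat; sarity : nat }.

Definition star_sym : symb := Symb 0 0.
Definition dot_sym : symb := Symb 0 2.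

Inductive term : Type :=
| Var : nat -> term
| Fn : symb -> list term -> term.

Definition Star : term := Fn star_sym [].
Definition Dot (a b : term) : term := Fn dot_sym [a; b].

Fixpoint wf (t : term) : Prop :=
  match t with
  | Var _ => True
  | Fn f args =>
      length args = sarity f /\
      (fix wfl (l : list term) : Prop :=
         match l with [] => True | a :: l' => wf a /\ wfl l' end) args
  end.

Fixpoint vars (t : term) : list nat :=
  match t with
  | Var x => [x]
  | Fn _ args => flat_map vars args
  end.

Definition closed (t : term) : Prop := vars t = [].

Fixpoint syms (t : term) : list symb :=
  match t with
  | Var _ => []
  | Fn f args => f :: flat_map syms args
  end.

Fixpoint height (t : term) : nat :=
  match t with
  | Var _ => 0
  | Fn _ args => fold_right (fun a m => Nat.max (S (height a)) m) 0 args
  end.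

Fixpoint occ (d : nat) (t : term) : list (nat * nat) :=
  match t with
  | Var x => [(x, d)]
  | Fn _ args => flat_map (occ (S d)) args
  end.

Fixpoint subst (s : nat -> term) (t : term) : term :=
  match t with
  | Var x => s x
  | Fn f args => Fn f (map (subst s) args)
  end.

Definition unifier (th : nat -> term) (a b : term) : Prop :=
  subst th a = subst th b.

Definition mgu (th : nat -> term) (a b : term) : Prop :=
  unifier th a b /\
  forall sg, unifier sg a b ->
    exists rho, forall x, sg x = subst rho (th x).

(* A flow  t <- u  is represented by the pair (t, u). *)
Definition flow : Type := (term * term)%type.

Definition is_flow (f : flow) : Prop :=
  wf (fst f) /\ wf (snd f) /\ incl (vars (fst f)) (vars (snd f)).

Definition flow_vars (f : flow) : list nat := vars (fst f) ++ vars (snd f).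

(* Flows are considered up to renaming of variables. *)
Definition rename (p : nat -> nat) (f : flow) : flow :=
  (subst (fun x => Var (p x)) (fst f), subst (fun x => Var (p x)) (snd f)).

Definition flow_equiv (f g : flow) : Prop :=
  exists p : nat -> nat, (forall x y, p x = p y -> x = y) /\ g = rename p f.

(* r is (a representative of) the product f g, which is defined iff
   such an r exists: (u <- v)(t <- w) = u th <- w th, th an mgu of v, t,
   representatives chosen with disjoint variables. *)
Definition product (f g r : flow) : Prop :=
  exists f' g' th,
    flow_equiv f f' /\ flow_equiv g g' /\
    (forall x, In x (flow_vars f') -> ~ In x (flow_vars g')) /\
    mgu th (snd f') (fst g') /\
    flow_equiv (subst th (fst f'), subst th (snd g')) r.

(* A wiring: a finite set of flows, given by a list. *)
Definition wiring : Type := list flow.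

Definition is_wiring (F : wiring) : Prop := forall f, In f F -> is_flow f.

Definition in_wiring (F : wiring) (g : flow) : Prop :=
  exists f, In f F /\ flow_equiv f g.

Definition id_flow : flow := (Var 0, Var 0).

Fixpoint in_pow (F : wiring) (n : nat) (g : flow) : Prop :=
  match n with
  | 0 => flow_equiv id_flow g
  | S m => exists f h, in_wiring F f /\ in_pow F m h /\ product f h g
  end.

Definition fact_of (t : term) : flow := (t, Star).

Definition in_app (F : wiring) (u : term) (r : flow) : Prop :=
  exists f, in_wiring F f /\ product f (fact_of u) r.

Definition in_pow_app (F : wiring) (n : nat) (u : term) (r : flow) : Prop :=
  exists g, in_pow F n g /\ product g (fact_of u) r.

Definition balanced_flow (f : flow) : Prop :=
  forall x d1 d2,
    In (x, d1) (occ 0 (fst f) ++ occ 0 (snd f)) ->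
    In (x, d2) (occ 0 (fst f) ++ occ 0 (snd f)) -> d1 = d2.

Definition balanced (F : wiring) : Prop := forall f, In f F -> balanced_flow f.

Definition flow_height (f : flow) : nat := Nat.max (height (fst f)) (height (snd f)).

Definition wiring_height (F : wiring) : nat :=
  fold_right (fun f m => Nat.max (flow_height f) m) 0 F.

Definition wiring_syms (F : wiring) : list symb :=
  flat_map (fun f => syms (fst f) ++ syms (snd f)) F.

(* Comp(F): the fact_of t <- star belongs to Comp(F) iff in_comp F t *)
Definition in_comp (F : wiring) (t : term) : Prop :=
  wf t /\ closed t /\ height t <= wiring_height F /\
  (forall s, In s (syms t) -> s = star_sym \/ In s (wiring_syms F)).

(* Main.v *)
Require Import Defs.
From Stdlib Require Import Arith List Lia.
Import ListNotations.


Fixpoint term_ind2 (P : term -> Prop) (Hv : forall x, P (Var x))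
  (Hf : forall f l, Forall P l -> P (Fn f l)) (t : term) : P t :=
  match t with
  | Var x => Hv x
  | Fn f l => Hf f l ((fix go (l : list term) : Forall P l :=
       match l with [] => Forall_nil _ | a :: l' => Forall_cons _ (term_ind2 P Hv Hf a) (go l') end) l)
  end.

Lemma wf_Fn f l : wf (Fn f l) <-> length l = sarity f /\ Forall wf l.
Proof.
  simpl. split; intros [H1 H2]; split; auto; clear H1.
  - induction l; simpl in *; auto. destruct H2; constructor; auto.
  - induction l; simpl in *; auto. inversion H2; subst; split; auto. apply IHl; auto.
Qed.

Lemma height_Fn_le f l k : height (Fn f l) <= k <-> Forall (fun a => S (height a) <= k) l.
Proof.
  induction l; split; intro H.
  - constructor.
  - simpl; lia.
  - assert (E : height (Fn f (a :: l)) = Nat.max (S (height a)) (height (Fn f l))) by reflexivity.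
    rewrite E in H. apply Nat.max_lub_iff in H as [H1 H2]. constructor; auto. apply IHl; auto.
  - assert (E : height (Fn f (a :: l)) = Nat.max (S (height a)) (height (Fn f l))) by reflexivity.
    rewrite E. inversion H; subst. apply Nat.max_lub; auto. apply IHl; auto.
Qed.

Lemma height_Fn_ge f l a : In a l -> S (height a) <= height (Fn f l).
Proof.
  intro Ha. assert (H := proj1 (height_Fn_le f l (height (Fn f l))) (le_n _)).
  rewrite Forall_forall in H. auto.
Qed.

Lemma map_eq_in {A B} (f g : A -> B) l : map f l = map g l -> forall a, In a l -> f a = g a.
Proof. induction l; simpl; intros H b Hb; [contradiction|]. injection H; intros. destruct Hb; subst; auto. Qed.

Lemma subst_agree s1 s2 t : (forall x, In x (vars t) -> s1 x = s2 x) -> subst s1 t = subst s2 t.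
Proof.
  revert t; refine (term_ind2 _ _ _); simpl; intros.
  - auto.
  - f_equal. apply map_ext_in. intros a Ha. rewrite Forall_forall in H. apply H; auto.
    intros x Hx; apply H0, in_flat_map; eauto.
Qed.

Lemma subst_agree_inv s1 s2 t : subst s1 t = subst s2 t -> forall x, In x (vars t) -> s1 x = s2 x.
Proof.
  revert t; refine (term_ind2 _ _ _); simpl; intros.
  - destruct H0 as [<-|[]]; auto.
  - injection H0; intro E. apply in_flat_map in H1 as [a [Ha Hx]].
    rewrite Forall_forall in H. eapply H; eauto. eapply map_eq_in in E; eauto.
Qed.

Lemma subst_Var t : subst Var t = t.
Proof.
  revert t; refine (term_ind2 _ _ _); simpl; intros; auto.
  f_equal. rewrite Forall_forall in H. rewrite <- (map_id l) at 2. apply map_ext_in; auto.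
Qed.

Lemma subst_closed s t : vars t = [] -> subst s t = t.
Proof. intro H. rewrite <- (subst_Var t) at 2. apply subst_agree. rewrite H; simpl; tauto. Qed.

Lemma occ_vars t d x e : In (x, e) (occ d t) -> In x (vars t).
Proof.
  revert t d; refine (term_ind2 _ _ _); simpl; intros.
  - destruct H as [H|[]]; injection H; auto.
  - apply in_flat_map in H0 as [a [Ha Hx]]. apply in_flat_map. rewrite Forall_forall in H; eauto.
Qed.

Lemma vars_occ t d x : In x (vars t) -> exists e, In (x, e) (occ d t).
Proof.
  revert t d; refine (term_ind2 _ _ _); simpl; intros.
  - destruct H as [<-|[]]; eauto.
  - apply in_flat_map in H0 as [a [Ha Hx]]. rewrite Forall_forall in H.
    destruct (H a Ha (S d) Hx) as [e He]. exists e. apply in_flat_map; eauto.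
Qed.

Lemma occ_depth t d x e : In (x, e) (occ d t) -> e <= d + height t.
Proof.
  revert t d; refine (term_ind2 _ _ _); simpl; intros.
  - destruct H as [H|[]]; injection H; intros; lia.
  - apply in_flat_map in H0 as [a [Ha Hx]]. rewrite Forall_forall in H.
    specialize (H a Ha _ Hx). pose proof (height_Fn_ge f l a Ha). simpl in H0. lia.
Qed.

Lemma occ_subst th t d y k : In (y, k) (occ d (subst th t)) <->
  exists x e, In (x, e) (occ d t) /\ In (y, k) (occ e (th x)).
Proof.
  revert t d; refine (term_ind2 _ _ _); simpl; intros.
  - split; [intro; exists x, d; auto | intros [x' [e [[H1|[]] H2]]]; injection H1; intros; subst; auto].
  - rewrite Forall_forall in H. rewrite flat_map_concat_map, map_map, <- flat_map_concat_map.
    split.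
    + intro H0. apply in_flat_map in H0 as [a [Ha Hy]]. apply H in Hy as [x [e [H1 H2]]]; auto.
      exists x, e; split; auto. apply in_flat_map; eauto.
    + intros [x [e [H1 H2]]]. apply in_flat_map in H1 as [a [Ha Hx]]. apply in_flat_map.
      exists a; split; auto. apply H; eauto.
Qed.

Lemma vars_subst th t y : In y (vars (subst th t)) <-> exists x, In x (vars t) /\ In y (vars (th x)).
Proof.
  split.
  - intro H. destruct (vars_occ _ 0 _ H) as [k Hk]. apply occ_subst in Hk as [x [e [H1 H2]]].
    exists x; split; eapply occ_vars; eauto.
  - intros [x [H1 H2]]. destruct (vars_occ _ 0 _ H1) as [e He]. destruct (vars_occ _ e _ H2) as [k Hk].
    eapply occ_vars. apply occ_subst. eauto.
Qed.

Lemma syms_subst th t s : In s (syms (subst th t)) <->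
  In s (syms t) \/ exists x, In x (vars t) /\ In s (syms (th x)).
Proof.
  revert t; refine (term_ind2 _ _ _); simpl; intros.
  - split; [eauto | intros [[]|[x' [[<-|[]] H]]]; auto].
  - rewrite Forall_forall in H. rewrite flat_map_concat_map, map_map, <- flat_map_concat_map.
    split.
    + intros [<-|H0]; auto. apply in_flat_map in H0 as [a [Ha Hs]]. apply H in Hs as [Hs|[x [H1 H2]]]; auto.
      * left; right; apply in_flat_map; eauto.
      * right; exists x; split; auto; apply in_flat_map; eauto.
    + intros [[<-|H0]|[x [H1 H2]]]; auto.
      * apply in_flat_map in H0 as [a [Ha Hs]]. right. apply in_flat_map. exists a; split; auto; apply H; auto.
      * apply in_flat_map in H1 as [a [Ha Hx]]. right. apply in_flat_map. exists a; split; auto; apply H; eauto.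
Qed.

Lemma wf_subst th t : wf t -> (forall x, In x (vars t) -> wf (th x)) -> wf (subst th t).
Proof.
  revert t; refine (term_ind2 _ _ _); intros.
  - apply H0; simpl; auto.
  - apply wf_Fn in H0 as [H2 H3]. change (wf (Fn f (map (subst th) l))). apply wf_Fn. rewrite length_map. split; auto.
    rewrite Forall_forall in *. intros b Hb. apply in_map_iff in Hb as [a [<- Ha]].
    apply H; auto. intros; apply H1. simpl. apply in_flat_map; eauto.
Qed.

Lemma wf_subst_inv th t : wf (subst th t) -> wf t /\ (forall x, In x (vars t) -> wf (th x)).
Proof.
  revert t; refine (term_ind2 _ _ _); intros.
  - split; [exact I|]. intros x' [<-|[]]; auto.
  - change (wf (Fn f (map (subst th) l))) in H0. apply wf_Fn in H0 as [H1 H2]. rewrite length_map in H1.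
    rewrite Forall_forall in *. split.
    + apply wf_Fn; split; auto. rewrite Forall_forall. intros a Ha. apply H; auto. apply H2, in_map; auto.
    + intros x Hx. simpl in Hx. apply in_flat_map in Hx as [a [Ha Hx]]. eapply H; eauto. apply H2, in_map; auto.
Qed.

Lemma height_subst_le th t d H : d + height t <= H ->
  (forall x e, In (x, e) (occ d t) -> e + height (th x) <= H) -> d + height (subst th t) <= H.
Proof.
  revert t d; refine (term_ind2 _ _ _); intros.
  - specialize (H1 x d (or_introl eq_refl)). simpl; lia.
  - rename H0 into IH, H1 into Hh, H2 into Ho.
    change (d + height (Fn f (map (subst th) l)) <= H). rewrite Forall_forall in IH.
    assert (height (Fn f (map (subst th) l)) <= H - d); [|lia].
    apply height_Fn_le. rewrite Forall_forall. intros b Hb. apply in_map_iff in Hb as [a [<- Ha]].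
    assert (S d + height (subst th a) <= H); [|lia]. apply IH; auto.
    + pose proof (height_Fn_ge f l a Ha). lia.
    + intros; apply Ho. simpl. apply in_flat_map; eauto.
Qed.

Lemma height_subst_ge th t d x e : In (x, e) (occ d t) -> e + height (th x) <= d + height (subst th t).
Proof.
  revert t d; refine (term_ind2 _ _ _); simpl; intros.
  - destruct H as [H|[]]; injection H; intros; subst; lia.
  - apply in_flat_map in H0 as [a [Ha Hx]]. rewrite Forall_forall in H. specialize (H a Ha _ Hx).
    pose proof (height_Fn_ge f (map (subst th) l) (subst th a) (in_map _ _ _ Ha)). simpl in H0. lia.
Qed.

Lemma height_le_subst rho t : height t <= height (subst rho t).
Proof.
  revert t; refine (term_ind2 _ _ _); simpl; intros; [lia|].
  change (height (Fn f l) <= height (Fn f (map (subst rho) l))).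
  apply height_Fn_le. rewrite Forall_forall in *. intros a Ha.
  pose proof (height_Fn_ge f _ _ (in_map (subst rho) _ _ Ha)). specialize (H a Ha). lia.
Qed.


Definition symb_eq_dec (a b : symb) : {a = b} + {a <> b}.
Proof. decide equality; apply Nat.eq_dec. Defined.

Fixpoint norm (Sy : list symb) (k : nat) (t : term) {struct t} : term :=
  match t with
  | Var x => Var x
  | Fn f args =>
      if in_dec symb_eq_dec f Sy then
        if Nat.eq_dec (length args) (sarity f) then
          match args with
          | [] => Fn f []
          | _ :: _ => match k with 0 => Var 0 | S k' => Fn f (map (norm Sy k') args) end
          end
        else Var 0
      else Var 0
  end.

Lemma norm_props Sy t : forall k, height (norm Sy k t) <= k /\ wf (norm Sy k t) /\
  incl (syms (norm Sy k t)) Sy.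
Proof.
  revert t; refine (term_ind2 _ _ _); intros.
  - simpl. repeat split; try lia; intros a [].
  - simpl. destruct (in_dec symb_eq_dec f Sy) as [Hin|]; [|simpl; repeat split; try lia; intros a []].
    destruct (Nat.eq_dec (length l) (sarity f)) as [Hl|]; [|simpl; repeat split; try lia; intros a []].
    destruct l as [|b l'].
    + simpl in *. repeat split; try lia; auto. intros a [<-|[]]; auto.
    + destruct k as [|k']; [simpl; repeat split; try lia; intros a []|].
      rewrite Forall_forall in H. split; [|split].
      * apply height_Fn_le. rewrite Forall_forall. intros c Hc. apply in_map_iff in Hc as [a [<- Ha]].
        destruct (H a Ha k') as [H1 _]. lia.
      * apply wf_Fn. rewrite length_map. split; auto. rewrite Forall_forall.
        intros c Hc. apply in_map_iff in Hc as [a [<- Ha]]. apply (H a Ha k').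
      * intros s Hs. destruct Hs as [<-|Hs]; auto. apply in_flat_map in Hs as [c [Hc Hs]].
        apply in_map_iff in Hc as [a [<- Ha]]. apply (H a Ha k'); auto.
Qed.

Lemma norm_subst Sy th D k t : forall d, wf t -> incl (syms t) Sy -> d + height t <= k ->
  (forall x e, In (x, e) (occ d t) -> D x = e) ->
  norm Sy (k - d) (subst th t) = subst (fun x => norm Sy (k - D x) (th x)) t.
Proof.
  revert t; refine (term_ind2 _ _ _); intros.
  - simpl. rewrite (H2 x d); simpl; auto.
  - rename H into IH. apply wf_Fn in H0 as [Hl Hw].
    assert (Hin : In f Sy) by (apply H1; simpl; auto).
    simpl. destruct (in_dec symb_eq_dec f Sy) as [_|C]; [|contradiction].
    rewrite length_map. destruct (Nat.eq_dec (length l) (sarity f)) as [_|C]; [|contradiction].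
    destruct l as [|b l']; [reflexivity|].
    pose proof (height_Fn_ge f _ b (in_eq b l')).
    destruct (k - d) as [|m] eqn:Ekd; [lia|].
    change (Fn f (map (norm Sy m) (map (subst th) (b :: l'))) =
            Fn f (map (subst (fun x => norm Sy (k - D x) (th x))) (b :: l'))).
    f_equal. rewrite map_map. apply map_ext_in. intros a Ha.
    rewrite Forall_forall in IH, Hw.
    replace m with (k - S d) by lia. apply IH; auto.
    + intros s Hs. apply H1. change (In s (f :: flat_map syms (b :: l'))). right. apply in_flat_map; eauto.
    + pose proof (height_Fn_ge f _ a Ha). lia.
    + intros x e Hx. apply H3. change (In (x, e) (flat_map (occ (S d)) (b :: l'))). apply in_flat_map; eauto.
Qed.

Fixpoint relabel (d : nat) (t : term) : term :=
  match t with
  | Var _ => Var d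
  | Fn f args => Fn f (map (relabel (S d)) args)
  end.

Lemma relabel_subst th D t : forall d, (forall x e, In (x, e) (occ d t) -> D x = e) ->
  relabel d (subst th t) = subst (fun x => relabel (D x) (th x)) t.
Proof.
  revert t; refine (term_ind2 _ _ _); intros.
  - simpl. rewrite (H x d); simpl; auto.
  - simpl. f_equal. rewrite map_map. apply map_ext_in. intros a Ha. rewrite Forall_forall in H.
    apply H; auto. intros x e Hx. apply H0. simpl. apply in_flat_map; eauto.
Qed.

Lemma relabel_inst rho t : forall d, relabel d t = subst rho t ->
  forall y e, In (y, e) (occ d t) -> rho y = Var e.
Proof.
  revert t; refine (term_ind2 _ _ _); intros.
  - simpl in *. destruct H0 as [H0|[]]. injection H0; intros; subst; auto.
  - simpl in *. injection H0; intro E. apply in_flat_map in H1 as [a [Ha Hy]].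
    rewrite Forall_forall in H. eapply H; eauto. eapply map_eq_in in E; eauto.
Qed.



Lemma ren_height (p : nat -> nat) t : height (subst (fun x => Var (p x)) t) = height t.
Proof.
  apply Nat.le_antisymm; [|apply height_le_subst].
  apply (height_subst_le (fun x => Var (p x)) t 0). lia. intros x e He. apply occ_depth in He. simpl. lia.
Qed.

Lemma ren_wf (p : nat -> nat) t : wf (subst (fun x => Var (p x)) t) <-> wf t.
Proof. split; [intro H; apply (wf_subst_inv (fun x => Var (p x)) t H) | intro; apply wf_subst; simpl; auto]. Qed.

Lemma ren_syms (p : nat -> nat) t : incl (syms (subst (fun x => Var (p x)) t)) (syms t).
Proof. intros a Ha. apply syms_subst in Ha as [Ha|[x [_ []]]]; auto. Qed.

Lemma ren_occ (p : nat -> nat) t d y e : In (y, e) (occ d (subst (fun x => Var (p x)) t)) -> exists x, y = p x /\ In (x, e) (occ d t).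
Proof.
  intro H. apply occ_subst in H as [x [e' [H1 [H2|[]]]]]. injection H2; intros; subst; eauto.
Qed.

Lemma ren_vars (p : nat -> nat) t y : In y (vars (subst (fun x => Var (p x)) t)) <-> exists x, y = p x /\ In x (vars t).
Proof.
  rewrite vars_subst. split; intros [x [H1 H2]]; exists x.
  - destruct H2 as [<-|[]]; auto.
  - subst; simpl; auto.
Qed.


Definition Inv (Sy : list symb) (H : nat) (g : flow) : Prop :=
  balanced_flow g /\ wf (fst g) /\ wf (snd g) /\ height (fst g) <= H /\ height (snd g) <= H /\
  incl (syms (fst g)) Sy /\ incl (syms (snd g)) Sy.

Lemma Inv_equiv Sy H f g : Inv Sy H f -> flow_equiv f g -> Inv Sy H g.
Proof.
  intros [Hb [w1 [w2 [h1 [h2 [s1 s2]]]]]] [p [Hp ->]]. unfold rename; simpl.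
  repeat split.
  - intros y d1 d2 H1 H2. apply in_app_iff in H1, H2.
    assert (K : forall d, In (y, d) (occ 0 (subst (fun x => Var (p x)) (fst f))) \/
                          In (y, d) (occ 0 (subst (fun x => Var (p x)) (snd f))) ->
                exists x, y = p x /\ In (x, d) (occ 0 (fst f) ++ occ 0 (snd f))).
    { intros d [K|K]; apply ren_occ in K as [x [E K]]; exists x; split; auto; apply in_app_iff; auto. }
    destruct (K _ H1) as [x1 [E1 K1]]. destruct (K _ H2) as [x2 [E2 K2]].
    rewrite E1 in E2. apply Hp in E2. subst. eapply Hb; eauto.
  - simpl; apply ren_wf; auto.
  - simpl; apply ren_wf; auto.
  - simpl; rewrite ren_height; auto.
  - simpl; rewrite ren_height; auto.
  - simpl; intros a Ha; apply s1, (ren_syms p); auto.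
  - simpl; intros a Ha; apply s2, (ren_syms p); auto.
Qed.


Lemma consistent (f h : flow) : balanced_flow f -> balanced_flow h ->
  (forall x, In x (flow_vars f) -> ~ In x (flow_vars h)) ->
  exists D : nat -> nat, forall x e,
    In (x, e) ((occ 0 (fst f) ++ occ 0 (snd f)) ++ (occ 0 (fst h) ++ occ 0 (snd h))) -> D x = e.
Proof.
  intros Bf Bh Hd. set (L := (occ 0 (fst f) ++ occ 0 (snd f)) ++ (occ 0 (fst h) ++ occ 0 (snd h))).
  exists (fun x => match find (fun q => Nat.eqb (fst q) x) L with Some q => snd q | None => 0 end).
  intros x e He. destruct (find (fun q => Nat.eqb (fst q) x) L) as [[x' e']|] eqn:E.
  - apply find_some in E as [E1 E2]. simpl in E2. apply Nat.eqb_eq in E2. subst x'. simpl.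
    assert (V : forall e0, In (x, e0) (occ 0 (fst f) ++ occ 0 (snd f)) -> In x (flow_vars f)).
    { intros e0 K. unfold flow_vars. apply in_app_iff in K as [K|K]; apply in_app_iff; eauto using occ_vars. }
    assert (W : forall e0, In (x, e0) (occ 0 (fst h) ++ occ 0 (snd h)) -> In x (flow_vars h)).
    { intros e0 K. unfold flow_vars. apply in_app_iff in K as [K|K]; apply in_app_iff; eauto using occ_vars. }
    unfold L in *. apply in_app_iff in E1, He.
    destruct E1 as [E1|E1], He as [He|He].
    + eapply Bf; eauto.
    + exfalso; eapply Hd; eauto.
    + exfalso; eapply Hd; eauto.
    + eapply Bh; eauto.
  - eapply find_none in E; eauto. simpl in E. rewrite Nat.eqb_refl in E. discriminate.
Qed.

Lemma Inv_product Sy H f h r : Inv Sy H f -> Inv Sy H h -> product f h r -> Inv Sy H r.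
Proof.
  intros If Ih [f' [h' [th [Ef [Eh [Hd [[Hu Hgen] Er]]]]]]].
  apply (Inv_equiv _ _ _ _ If) in Ef. apply (Inv_equiv _ _ _ _ Ih) in Eh.
  clear If Ih. eapply Inv_equiv; [|exact Er].
  destruct (consistent f' h' (proj1 Ef) (proj1 Eh) Hd) as [D HD].
  destruct f' as [a1 v1], h' as [t2 w2]. simpl in *.
  destruct Ef as [_ [wa1 [wv1 [ha1 [hv1 [sa1 sv1]]]]]].
  destruct Eh as [_ [wt2 [ww2 [ht2 [hw2 [st2 sw2]]]]]]. simpl in *.
  assert (Da1 : forall x e, In (x, e) (occ 0 a1) -> D x = e) by (intros; apply HD; repeat (rewrite in_app_iff); tauto).
  assert (Dv1 : forall x e, In (x, e) (occ 0 v1) -> D x = e) by (intros; apply HD; repeat (rewrite in_app_iff); tauto).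
  assert (Dt2 : forall x e, In (x, e) (occ 0 t2) -> D x = e) by (intros; apply HD; repeat (rewrite in_app_iff); tauto).
  assert (Dw2 : forall x e, In (x, e) (occ 0 w2) -> D x = e) by (intros; apply HD; repeat (rewrite in_app_iff); tauto).
  (* bounds on th via normalisation *)
  destruct (Hgen (fun x => norm Sy (H - D x) (th x))) as [rho1 Hr1].
  { unfold unifier. rewrite <- (norm_subst Sy th D H v1 0), <- (norm_subst Sy th D H t2 0); auto.
    rewrite Hu; auto. }
  assert (Tx : forall x, height (th x) <= H - D x /\ wf (th x) /\ incl (syms (th x)) Sy).
  { intro x. destruct (norm_props Sy (th x) (H - D x)) as [N1 [N2 N3]]. rewrite Hr1 in N1, N2, N3.
    split; [pose proof (height_le_subst rho1 (th x)); lia|]. split; [apply (wf_subst_inv rho1); auto|].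
    intros s Hs. apply N3. apply syms_subst. auto. }
  destruct (Hgen (fun x => relabel (D x) (th x))) as [rho2 Hr2].
  { unfold unifier. rewrite <- (relabel_subst th D v1 0), <- (relabel_subst th D t2 0); auto.
    rewrite Hu; auto. }
  assert (Rx : forall x y e, In (y, e) (occ (D x) (th x)) -> rho2 y = Var e).
  { intros x. apply relabel_inst. auto. }
  assert (Comp : forall c, (forall x e, In (x, e) (occ 0 c) -> D x = e) -> wf c -> height c <= H ->
     incl (syms c) Sy ->
     wf (subst th c) /\ height (subst th c) <= H /\ incl (syms (subst th c)) Sy /\
     (forall y k, In (y, k) (occ 0 (subst th c)) -> rho2 y = Var k)).
  { intros c Dc wc hc sc. split; [|split; [|split]].
    - apply wf_subst; auto. intros; apply Tx.
    - apply (height_subst_le th c 0); [lia|]. intros x e He. pose proof (occ_depth _ _ _ _ He).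
      rewrite <- (Dc x e He). destruct (Tx x) as [T _]. rewrite (Dc x e He) in T |- *. lia.
    - intros s Hs. apply syms_subst in Hs as [Hs|[x [_ Hs]]]; auto. apply (Tx x); auto.
    - intros y k Hy. apply occ_subst in Hy as [x [e [H1 H2]]]. rewrite <- (Dc x e H1) in H2. eauto. }
  destruct (Comp a1) as [c1 [c2 [c3 c4]]]; auto.
  destruct (Comp w2) as [d1 [d2 [d3 d4]]]; auto.
  repeat split; simpl; auto.
  intros y k1 k2 K1 K2.
  assert (G : forall k, In (y, k) (occ 0 (subst th a1) ++ occ 0 (subst th w2)) -> rho2 y = Var k).
  { intros k K. apply in_app_iff in K as [K|K]; auto. }
  rewrite (G _ K1) in G. specialize (G _ K2). injection G; auto.
Qed.


Lemma Inv_F F f : is_wiring F -> balanced F -> In f F -> Inv (wiring_syms F) (wiring_height F) f.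
Proof.
  intros Hw Hb Hf. destruct (Hw f Hf) as [w1 [w2 _]].
  assert (Hh : flow_height f <= wiring_height F).
  { clear -Hf. induction F as [|g F IH]; simpl in *; [contradiction|].
    destruct Hf as [->|Hf]; [lia|]. specialize (IH Hf). lia. }
  unfold flow_height in Hh.
  repeat split; auto; try lia.
  - intros s Hs. unfold wiring_syms. apply in_flat_map. exists f; split; auto. apply in_app_iff; auto.
  - intros s Hs. unfold wiring_syms. apply in_flat_map. exists f; split; auto. apply in_app_iff; auto.
Qed.

Lemma Inv_in_wiring F f : is_wiring F -> balanced F -> in_wiring F f -> Inv (wiring_syms F) (wiring_height F) f.
Proof. intros Hw Hb [g [Hg E]]. eapply Inv_equiv; eauto. apply Inv_F; auto. Qed.

Lemma Inv_id Sy H : Inv Sy H id_flow.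
Proof.
  split.
  - intros x d1 d2 [K1|[K1|[]]] [K2|[K2|[]]]; congruence.
  - repeat split; simpl; try lia; intros a [].
Qed.

Lemma Inv_pow F n g : is_wiring F -> balanced F -> in_pow F n g -> Inv (wiring_syms F) (wiring_height F) g.
Proof.
  intros Hw Hb. revert g. induction n; simpl; intros g Hg.
  - eapply Inv_equiv; eauto. apply Inv_id.
  - destruct Hg as [f [h [H1 [H2 H3]]]]. apply (Inv_product _ _ f h g); auto. apply Inv_in_wiring; auto.
Qed.

Lemma flow_equiv_refl f : flow_equiv f f.
Proof.
  exists (fun x => x). split; auto. destruct f; unfold rename; simpl.
  change (fun x => Var x) with Var. rewrite !subst_Var; auto.
Qed.

Lemma rename_closed p t : closed t -> rename p (fact_of t) = fact_of t.
Proof. intro H. unfold rename, fact_of; simpl. rewrite subst_closed; auto. Qed.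

Theorem main6 (F : wiring) :
  is_wiring F -> balanced F ->
  (forall u, in_comp F u ->
     forall r, in_app F u r -> exists t, r = fact_of t /\ in_comp F t) /\
  (forall n : nat,
     (forall u, in_comp F u -> forall r, ~ in_pow_app F n u r) ->
     forall g, ~ in_pow F n g).
Proof.
  intros Hw Hb. split.
  - intros u [wu [cu [hu su]]] r [f [Hf [f' [g' [th [Ef [Eg [Hd [[Hu _] Er]]]]]]]]].
    destruct Hf as [f0 [Hf0 E0]].
    assert (If : Inv (wiring_syms F) (wiring_height F) f').
    { eapply Inv_equiv; [|exact Ef]. eapply Inv_equiv; [|exact E0]. apply Inv_F; auto. }
    assert (Vf : incl (vars (fst f')) (vars (snd f'))).
    { destruct (Hw f0 Hf0) as [_ [_ V]]. destruct E0 as [p [_ ->]]. destruct Ef as [q [_ ->]].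
      unfold rename; simpl. intros y Hy.
      apply ren_vars in Hy as [x [-> Hy]]. apply ren_vars in Hy as [z [-> Hz]].
      apply ren_vars. exists (p z); split; auto. apply ren_vars. eauto. }
    destruct Eg as [q [_ Eg]]. rewrite rename_closed in Eg; auto. subst g'.
    destruct f' as [a v]. simpl in *. unfold unifier in Hu. rewrite (subst_closed th u cu) in Hu.
    destruct If as [Bf [wa [wv [ha [hv [sa sv]]]]]]. simpl in *.
    assert (Cl : closed (subst th a)).
    { unfold closed. destruct (vars (subst th a)) as [|y l] eqn:E; auto. exfalso.
      assert (Hy : In y (vars (subst th a))) by (rewrite E; left; auto).
      apply vars_subst in Hy as [x [Hx Hy]]. apply Vf in Hx.
      assert (In y (vars (subst th v))) by (apply vars_subst; eauto).
      rewrite Hu, cu in H; contradiction. }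
    destruct Er as [p [_ Er]]. change (subst th (snd (Star, Star))) with Star in Er.
    change (subst th a, Fn star_sym []) with (fact_of (subst th a)) in Er. subst r. rewrite rename_closed; auto.
    exists (subst th a). split; [reflexivity|]. split; [|split; [auto|split]].
    + apply wf_subst; auto. intros x Hx. apply Vf in Hx.
      apply (wf_subst_inv th v); auto. rewrite Hu; auto.
    + apply (height_subst_le th a 0); [lia|]. intros x e He.
      assert (Hx : In x (vars v)) by (apply Vf; eapply occ_vars; eauto).
      destruct (vars_occ v 0 x Hx) as [e' He'].
      assert (e = e') by (eapply Bf; apply in_app_iff; eauto). subst e'.
      pose proof (height_subst_ge th v 0 x e He'). rewrite Hu in H. lia.
    + intros s Hs. apply syms_subst in Hs as [Hs|[x [Hx Hs]]]; auto.
      apply su. rewrite <- Hu. apply syms_subst. right. exists x; split; auto.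
  - intros n Hn g Hg. pose proof (Inv_pow F n g Hw Hb Hg) as Ig.
    destruct g as [a b].
    destruct Ig as [_ [wa [wb [ha [hb [sa sb]]]]]]. simpl in *.
    set (u := subst (fun _ => Star) b).
    assert (cu : closed u).
    { unfold closed. destruct (vars u) as [|y l] eqn:E; auto. exfalso.
      assert (Hy : In y (vars u)) by (rewrite E; left; auto).
      apply vars_subst in Hy as [x [_ []]]. }
    assert (Cu : in_comp F u).
    { split; [|split; [auto|split]].
      - apply wf_subst; auto. intros; simpl; auto.
      - apply (height_subst_le _ b 0); [lia|]. intros x e He. apply occ_depth in He. simpl. lia.
      - intros s Hs. apply syms_subst in Hs as [Hs|[x [_ [<-|[]]]]]; auto. }
    set (th := fun x => if in_dec Nat.eq_dec x (vars b) then Star else Var x).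
    apply (Hn u Cu (subst th a, Star)). exists (a, b). split; auto.
    exists (a, b), (fact_of u), th. split; [apply flow_equiv_refl|]. split; [apply flow_equiv_refl|].
    split; [|split].
    + intros x _. unfold flow_vars; simpl. rewrite cu. simpl. auto.
    + simpl. assert (Eb : subst th b = u).
      { apply subst_agree. intros x Hx. unfold th. destruct (in_dec Nat.eq_dec x (vars b)); auto; contradiction. }
      split.
      * unfold unifier. rewrite Eb, subst_closed; auto.
      * intros sg Hsg. exists sg. intros x. unfold th. destruct (in_dec Nat.eq_dec x (vars b)) as [Hx|Hx]; auto.
        unfold unifier in Hsg. rewrite (subst_closed sg u cu) in Hsg.
        apply (subst_agree_inv sg (fun _ => Star) b Hsg x Hx).
    + simpl. apply flow_equiv_refl.
Qed.

Theorem mainTheorem6 (F : wiring) :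
  is_wiring F -> balanced F ->
  (forall u, in_comp F u ->
     forall r, in_app F u r -> exists t, r = fact_of t /\ in_comp F t) /\
  (forall n : nat,
     (forall u, in_comp F u -> forall r, ~ in_pow_app F n u r) ->
     forall g, ~ in_pow F n g).
Proof. exact (main6 F). Qed.
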